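(* The set of all polynomials of several variables with integer coefficients that have a rational solution (i.e. a zero in $\mathbb Q^n$) is recursive if and only if the set of all polynomials of several variables with integer coefficients that have only finitely many rational solutions is recursively enumerable. Equivalently, the first set is not recursive if and only if the second set is not recursively enumerable.
   Context: Polynomials $D\in\mathbb Z[x_1,\ldots,x_n]$ ($n\ge1$ arbitrary) are coded as natural numbers so that recursiveness and recursive enumerability of sets of them make sense; a rational solution of $D$ is a tuple $(x_1,\ldots,x_n)\in\mathbb Q^n$ with $D(x_1,\ldots,x_n)=0$. *)

(* Defs.v *)
From Stdlib Require List.
From HB Require Import structures.
From mathcomp Require Import all_boot all_order all_algebra.
Set Implicit Arguments. Unset Strict Implicit. Unset Printing Implicit Defensive.
Import Order.TTheory GRing.Theory Num.Theory.

Inductive recfun : Type :=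
  | RZero
  | RSucc
  | RProj (i : nat)
  | RComp (f : recfun) (gs : seq recfun)
  | RRec (f g : recfun)
  | RMu (f : recfun).

Inductive reval : recfun -> seq nat -> nat -> Prop :=
  | ev_zero v : reval RZero v 0
  | ev_succ x v : reval RSucc (x :: v) x.+1
  | ev_proj i v : i < size v -> reval (RProj i) v (nth 0 v i)
  | ev_comp f gs v ys y :
      List.Forall2 (fun g y' => reval g v y') gs ys ->
      reval f ys y -> reval (RComp f gs) v y
  | ev_rec0 f g v y : reval f v y -> reval (RRec f g) (0 :: v) y
  | ev_recS f g n v r y :
      reval (RRec f g) (n :: v) r -> reval g (n :: r :: v) y ->
      reval (RRec f g) (n.+1 :: v) y
  | ev_mu f v y :
      reval f (y :: v) 0 ->
      (forall z, z < y -> exists m, reval f (z :: v) m.+1) ->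
      reval (RMu f) v y.

Definition recursive_set (S : nat -> Prop) : Prop :=
  exists f : recfun, forall k,
    (S k /\ reval f [:: k] 1) \/ (~ S k /\ reval f [:: k] 0).

Definition re_set (S : nat -> Prop) : Prop :=
  exists f : recfun, forall k, S k <-> exists y, reval f [:: k] y.

(* polynomial expressions with integer coefficients; variable [PVar i] is x_{i+1} *)
Inductive zpoly : Type :=
  | PVar (i : nat)
  | PConst (c : int)
  | PAdd (p q : zpoly)
  | PMul (p q : zpoly).

Fixpoint zpoly_wf (n : nat) (p : zpoly) : bool :=
  match p with
  | PVar i => i < n
  | PConst _ => true
  | PAdd p q | PMul p q => zpoly_wf n p && zpoly_wf n q
  end.

Fixpoint zpoly_eval (n : nat) (x : n.-tuple rat) (p : zpoly) : rat :=
  match p with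
  | PVar i => nth 0%R x i
  | PConst c => (c%:~R)%R
  | PAdd p q => (zpoly_eval x p + zpoly_eval x q)%R
  | PMul p q => (zpoly_eval x p * zpoly_eval x q)%R
  end.

Definition cpair (a b : nat) : nat := 'C(a + b + 1, 2) + a.

Definition code_int (c : int) : nat :=
  match c with Posz k => k.*2 | Negz k => k.*2.+1 end.

Fixpoint code_zpoly (p : zpoly) : nat :=
  match p with
  | PVar i => 4 * i
  | PConst c => 4 * code_int c + 1
  | PAdd p q => 4 * cpair (code_zpoly p) (code_zpoly q) + 2
  | PMul p q => 4 * cpair (code_zpoly p) (code_zpoly q) + 3
  end.

Definition code_poly (n : nat) (p : zpoly) : nat := cpair n (code_zpoly p).

Definition is_rat_solution (n : nat) (p : zpoly) (x : n.-tuple rat) : Prop :=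
  zpoly_eval x p = 0%R.

Definition has_finitely_many_rat_solutions (n : nat) (p : zpoly) : Prop :=
  exists s : seq (n.-tuple rat), forall x, is_rat_solution p x -> x \in s.

Definition HasRatSol (k : nat) : Prop :=
  exists (n : nat) (p : zpoly),
    [/\ 0 < n, zpoly_wf n p, k = code_poly n p &
        exists x : n.-tuple rat, is_rat_solution p x].

Definition FinRatSol (k : nat) : Prop :=
  exists (n : nat) (p : zpoly),
    [/\ 0 < n, zpoly_wf n p, k = code_poly n p &
        has_finitely_many_rat_solutions n p].

(* Main.v *)
Require Import Defs.
From mathcomp Require Import all_boot all_order all_algebra.
From Stdlib Require List.
From Stdlib Require Import Classical ClassicalEpsilon.
From mathcomp Require Import zify ring.
Set Implicit Arguments. Unset Strict Implicit. Unset Printing Implicit Defensive.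


Lemma reval_det : forall f v y, reval f v y -> forall y', reval f v y' -> y = y'.
Proof.
fix IH 4.
intros f v y H.
destruct H; intros y' H'; inversion H'; subst.
- done.
- done.
- done.
- assert (ys = ys0).
  { clear H0 H6 H'.
    revert ys0 H3.
    induction H as [|g y0 gs0 ys1 Hg Hgs IHgs]; intros ys0 H3; inversion H3; subst; auto.
    f_equal; [ exact (IH _ _ _ Hg _ H1) | apply IHgs; auto ]. }
  subst. exact (IH _ _ _ H0 _ H6).
- exact (IH _ _ _ H _ H4).
- have E := IH _ _ _ H _ H6. subst r0. exact (IH _ _ _ H0 _ H7).
- case: (ltngtP y y') => Hyy //.
  + destruct (H3 _ Hyy) as [m Hm]. have := IH _ _ _ H _ Hm. done.
  + destruct (H0 _ Hyy) as [m Hm]. have := IH _ _ _ Hm _ H2. done.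
Qed.

Definition cmp (a : nat) (F : seq nat -> nat) :=
  exists f, forall v, size v = a -> reval f v (F v).

Lemma c_ext a F G : (forall v, size v = a -> F v = G v) -> cmp a G -> cmp a F.
Proof. move=> E [f Hf]; exists f => v Hv; rewrite E //; exact: Hf. Qed.

Lemma c_const a c : cmp a (fun _ => c).
Proof.
elim: c => [|c [f Hf]]; first by exists RZero => v _; constructor.
exists (RComp RSucc [:: f]) => v Hv. apply: (@ev_comp _ _ _ [:: c]).
  by constructor; [exact: Hf|constructor].
exact: (ev_succ c [::]).
Qed.

Lemma c_proj a i : i < a -> cmp a (fun v => nth 0 v i).
Proof. move=> Hi; exists (RProj i) => v Hv; constructor; by rewrite Hv. Qed.

Lemma c_comp a (Fs : seq (seq nat -> nat)) G :
  List.Forall (cmp a) Fs -> cmp (size Fs) G -> cmp a (fun v => G (map (fun F => F v) Fs)).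
Proof.
move=> HF [g Hg].
have [gs Hgs] : exists gs, List.Forall2 (fun g F => forall v, size v = a -> reval g v (F v)) gs Fs.
  elim: HF => [|F Fs' [f Hf] _ [gs Hgs]]; first by exists [::].
  by exists (f :: gs); constructor.
exists (RComp g gs) => v Hv; apply: (@ev_comp _ _ _ (map (fun F => F v) Fs)).
  elim: Hgs {Hg} => //= g' F gs' Fs' H1 _ IH; constructor; auto.
apply: Hg; by rewrite size_map.
Qed.

Fixpoint PR (F : seq nat -> nat) (G : seq nat -> nat) n v :=
  match n with 0 => F v | m.+1 => G (m :: PR F G m v :: v) end.

Lemma c_rec a F G : cmp a F -> cmp a.+2 G -> cmp a.+1 (fun v => PR F G (head 0 v) (behead v)).
Proof.
move=> [f Hf] [g Hg]; exists (RRec f g) => [[|n v]] //= [Hv].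
elim: n => [|n IH] /=; first by constructor; auto.
apply: ev_recS; first exact: IH. apply: Hg => /=; by rewrite Hv.
Qed.

Lemma drop_mk (v : seq nat) k : drop k v = mkseq (fun j => nth 0 v (k + j)) (size v - k).
Proof.
apply: (@eq_from_nth _ 0); rewrite size_drop ?size_mkseq // => i Hi.
by rewrite nth_drop nth_mkseq.
Qed.

Lemma Forall_map (T U : Type) (P : U -> Prop) (f : T -> U) (s : seq T) :
  (forall x, List.In x s -> P (f x)) -> List.Forall P (map f s).
Proof.
elim: s => [|x s IH] H /=; constructor; first by apply: H; left.
apply: IH => y Hy; apply: H; by right.
Qed.

Lemma c_sub a m k Hs G : size Hs + (a - k) = m -> cmp m G -> List.Forall (cmp a) Hs ->
   cmp a (fun v => G (map (fun H => H v) Hs ++ drop k v)).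
Proof.
move=> Em HG HH.
apply: (@c_ext _ _ (fun v => G (map (fun H => H v) (Hs ++ mkseq (fun j v => nth 0 v (k+j)) (a - k))))).
  move=> v Hv; by rewrite map_cat drop_mk Hv /mkseq -map_comp.
apply: c_comp; last by rewrite size_cat size_mkseq Em.
apply List.Forall_app; split => //.
apply: Forall_map => j Hj; apply: c_proj.
have : j \in iota 0 (a - k).
  elim: (iota 0 (a - k)) Hj => //= x s IH [->|/IH]; rewrite inE ?eqxx // => ->; by rewrite orbT.
rewrite mem_iota; lia.
Qed.

Lemma c_prec a N F G : cmp a N -> cmp a F -> cmp a.+2 G -> cmp a (fun v => PR F G (N v) v).
Proof.
move=> HN HF HG.
apply: (@c_ext _ _ (fun v => (fun u => PR F G (head 0 u) (behead u)) (map (fun H => H v) [:: N] ++ drop 0 v))).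
  by move=> v _; rewrite drop0.
apply: (@c_sub a a.+1 0 [:: N] (fun u => PR F G (head 0 u) (behead u))); [by rewrite subn0 | exact: c_rec | by constructor].
Qed.

Lemma c_app1 a h F : cmp 1 (fun v => h (nth 0 v 0)) -> cmp a F -> cmp a (fun v => h (F v)).
Proof.
move=> Hh HF; apply: (@c_ext _ _ (fun v => (fun u => h (nth 0 u 0)) (map (fun H => H v) [:: F]))) => //.
apply: (@c_comp a [:: F] (fun u => h (nth 0 u 0))) => //; by constructor.
Qed.

Lemma c_app2 a h F G : cmp 2 (fun v => h (nth 0 v 0) (nth 0 v 1)) -> cmp a F -> cmp a G ->
  cmp a (fun v => h (F v) (G v)).
Proof.
move=> Hh HF HG; apply: (@c_ext _ _ (fun v => (fun u => h (nth 0 u 0) (nth 0 u 1)) (map (fun H => H v) [:: F; G]))) => //.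
apply: (@c_comp a [:: F; G] (fun u => h (nth 0 u 0) (nth 0 u 1))) => //; by repeat constructor.
Qed.

Lemma c_succ a F : cmp a F -> cmp a (fun v => (F v).+1).
Proof.
apply: c_app1; exists RSucc => [[|x [|y v]]] //= _; exact: (ev_succ x [::]).
Qed.

Lemma c_add a F G : cmp a F -> cmp a G -> cmp a (fun v => F v + G v).
Proof.
apply: c_app2.
apply: (@c_ext _ _ (fun v => PR (fun v => nth 0 v 1) (fun u => (nth 0 u 1).+1) (nth 0 v 0) v)).
  move=> v _; elim: (nth 0 v 0) => //= n IH; by rewrite -IH addSn.
apply: c_prec; [exact: c_proj | exact: c_proj | apply: c_succ; exact: c_proj].
Qed.

Lemma c_pred a F : cmp a F -> cmp a (fun v => (F v).-1).
Proof.
apply: c_app1.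
apply: (@c_ext _ _ (fun v => PR (fun _ => 0) (fun u => nth 0 u 0) (nth 0 v 0) v)).
  by move=> v _; case: (nth 0 v 0).
apply: c_prec; [exact: c_proj | exact: c_const | exact: c_proj].
Qed.

Lemma c_subn a F G : cmp a F -> cmp a G -> cmp a (fun v => F v - G v).
Proof.
apply: c_app2.
apply: (@c_ext _ _ (fun v => PR (fun v => nth 0 v 0) (fun u => (nth 0 u 1).-1) (nth 0 v 1) v)).
  move=> v _; elim: (nth 0 v 1) => /= [|n IH]; [by rewrite subn0 | by rewrite -IH subnS].
apply: c_prec; [exact: c_proj | exact: c_proj | apply: c_pred; exact: c_proj].
Qed.

Lemma c_mul a F G : cmp a F -> cmp a G -> cmp a (fun v => F v * G v).
Proof.
apply: c_app2.
apply: (@c_ext _ _ (fun v => PR (fun _ => 0) (fun u => nth 0 u 1 + nth 0 u 3) (nth 0 v 0) v)).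
  move=> v _; elim: (nth 0 v 0) => /= [|n IH]; [by [] | by rewrite -IH mulSn addnC].
apply: c_prec; [exact: c_proj | exact: c_const | apply: c_add; exact: c_proj].
Qed.

Lemma c_eqn a F G : cmp a F -> cmp a G -> cmp a (fun v => nat_of_bool (F v == G v)).
Proof.
move=> HF HG; apply: (@c_ext _ _ (fun v => 1 - ((F v - G v) + (G v - F v)))).
  move=> v _; case: (ltngtP (F v) (G v)) => H; lia.
apply: c_subn; [exact: c_const | apply: c_add; exact: c_subn].
Qed.

Lemma c_leq a F G : cmp a F -> cmp a G -> cmp a (fun v => nat_of_bool (F v <= G v)).
Proof.
move=> HF HG; apply: (@c_ext _ _ (fun v => 1 - (F v - G v))).
  move=> v _; case: (leqP (F v) (G v)) => H; lia.
apply: c_subn; [exact: c_const | exact: c_subn].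
Qed.

Lemma c_ltn a F G : cmp a F -> cmp a G -> cmp a (fun v => nat_of_bool (F v < G v)).
Proof. move=> HF HG; apply: c_leq => //; exact: c_succ. Qed.

Lemma c_andb a (P Q : seq nat -> bool) : cmp a (fun v => nat_of_bool (P v)) -> cmp a (fun v => nat_of_bool (Q v)) ->
  cmp a (fun v => nat_of_bool (P v && Q v)).
Proof.
move=> HP HQ; apply: (@c_ext _ _ (fun v => P v * Q v)); last exact: c_mul.
by move=> v _; case: (P v); case: (Q v).
Qed.

Lemma c_negb a (P : seq nat -> bool) : cmp a (fun v => nat_of_bool (P v)) ->
  cmp a (fun v => nat_of_bool (~~ P v)).
Proof.
move=> HP; apply: (@c_ext _ _ (fun v => 1 - P v)); last by apply: c_subn => //; exact: c_const.
by move=> v _; case: (P v).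
Qed.

Lemma c_orb a (P Q : seq nat -> bool) : cmp a (fun v => nat_of_bool (P v)) -> cmp a (fun v => nat_of_bool (Q v)) ->
  cmp a (fun v => nat_of_bool (P v || Q v)).
Proof.
move=> HP HQ; apply: (@c_ext _ _ (fun v => ~~ (~~ P v && ~~ Q v))).
  by move=> v _; case: (P v); case: (Q v).
by apply: c_negb; apply: c_andb; apply: c_negb.
Qed.

Lemma c_if a (P : seq nat -> bool) X Y : cmp a (fun v => nat_of_bool (P v)) -> cmp a X -> cmp a Y ->
  cmp a (fun v => if P v then X v else Y v).
Proof.
move=> HP HX HY; apply: (@c_ext _ _ (fun v => P v * X v + (1 - P v) * Y v)).
  by move=> v _; case: (P v) => /=; rewrite ?mul1n ?mul0n ?addn0.
apply: c_add; apply: c_mul => //; apply: c_subn => //; exact: c_const.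
Qed.

Lemma c_true a : cmp a (fun _ => nat_of_bool true). Proof. exact: c_const. Qed.
Lemma c_false a : cmp a (fun _ => nat_of_bool false). Proof. exact: c_const. Qed.

Ltac cmpt_ext := fail.
Ltac cmpt_ext2 := fail.
Ltac cmpt := repeat lazymatch goal with
 | |- cmp _ (fun _ => _ + _) => apply c_add
 | |- cmp _ (fun _ => _ - _) => apply c_subn
 | |- cmp _ (fun _ => _ * _) => apply c_mul
 | |- cmp _ (fun _ => (_).+1) => apply c_succ
 | |- cmp _ (fun _ => (_).-1) => apply c_pred
 | |- cmp _ (fun _ => if _ then _ else _) => apply c_if
 | |- cmp _ (fun _ => nat_of_bool (_ == _)) => apply c_eqn
 | |- cmp _ (fun _ => nat_of_bool (_ <= _)) => apply c_leq
 | |- cmp _ (fun _ => nat_of_bool (_ && _)) => apply c_andb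
 | |- cmp _ (fun _ => nat_of_bool (_ || _)) => apply c_orb
 | |- cmp _ (fun _ => nat_of_bool (~~ _)) => apply c_negb
 | |- cmp _ (fun _ => nth 0 _ _) => apply c_proj; done
 | |- cmp _ (fun _ => head 0 _) => apply (@c_proj _ 0); done
 | |- cmp _ (head 0) => apply (@c_proj _ 0); done
 | |- cmp _ (fun _ => _) => first [assumption | cmpt_ext | apply c_const]
 | |- cmp _ _ => assumption
 end.

Lemma PR_iter F h n v : PR F (fun u => h (nth 0 u 1)) n v = iter n h (F v).
Proof. by elim: n => //= n ->. Qed.

Lemma c_iter a N X h : cmp a.+2 (fun u => h (nth 0 u 1)) -> cmp a N -> cmp a X ->
  cmp a (fun v => iter (N v) h (X v)).
Proof.
move=> Hh HN HX; apply: (@c_ext _ _ (fun v => PR X (fun u => h (nth 0 u 1)) (N v) v)).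
  by move=> v _; rewrite PR_iter.
exact: c_prec.
Qed.

Definition tri s := 'C(s.+1, 2).
Lemma tri0 : tri 0 = 0. Proof. by []. Qed.
Lemma triS s : tri s.+1 = tri s + s.+1.
Proof. by rewrite /tri binS bin1 addnC. Qed.
Lemma tri_ge s : s <= tri s.
Proof. elim: s => // s IH; rewrite triS; lia. Qed.
Lemma tri_mono s s' : s < s' -> tri s.+1 <= tri s'.
Proof.
elim: s' => // s' IH; rewrite ltnS leq_eqVlt => /orP [/eqP -> //|/IH H].
rewrite (triS s'); lia.
Qed.

Lemma c_tri a F : cmp a F -> cmp a (fun v => tri (F v)).
Proof.
apply: c_app1; apply: (@c_ext _ _ (fun v => PR (fun _ => 0) (fun u => nth 0 u 1 + (nth 0 u 0).+1) (nth 0 v 0) v)).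
  move=> v _; elim: (nth 0 v 0) => //= n IH; by rewrite triS IH.
apply: c_prec; cmpt.
Qed.

Fixpoint diag c := match c with 0 => 0 | c'.+1 => if tri (diag c').+1 == c'.+1 then (diag c').+1 else diag c' end.

Lemma diag_spec c : tri (diag c) <= c < tri (diag c).+1.
Proof.
elim: c => // c /andP [H1 H2] /=.
case: eqP => [E|NE]; first by rewrite E leqnn /= triS; lia.
apply/andP; split; first lia.
have : c.+1 <= tri (diag c).+1 by [].
rewrite leq_eqVlt => /orP [/eqP E|//]; by rewrite E in NE.
Qed.

Lemma diag_uniq c s : tri s <= c < tri s.+1 -> diag c = s.
Proof.
move=> /andP [H1 H2]; have /andP [H3 H4] := diag_spec c.
case: (ltngtP (diag c) s) => // H.
- have := tri_mono H; lia.
- have := tri_mono H; lia.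
Qed.

Lemma c_diag a F : cmp a F -> cmp a (fun v => diag (F v)).
Proof.
apply: c_app1; apply: (@c_ext _ _ (fun v => PR (fun _ => 0)
   (fun u => if tri (nth 0 u 1).+1 == (nth 0 u 0).+1 then (nth 0 u 1).+1 else nth 0 u 1) (nth 0 v 0) v)).
  move=> v _; elim: (nth 0 v 0) => //= n IH; by rewrite IH.
apply: c_prec; cmpt; apply: c_tri; cmpt.
Qed.

Definition ufst c := c - tri (diag c).
Definition usnd c := diag c - ufst c.

Lemma cpairE a b : cpair a b = tri (a + b) + a.
Proof. by rewrite /cpair addn1. Qed.

Lemma diag_cpair a b : diag (cpair a b) = a + b.
Proof. apply: diag_uniq; rewrite cpairE triS; lia. Qed.

Lemma ufst_cpair a b : ufst (cpair a b) = a.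
Proof. rewrite /ufst diag_cpair cpairE; lia. Qed.
Lemma usnd_cpair a b : usnd (cpair a b) = b.
Proof. rewrite /usnd ufst_cpair diag_cpair; lia. Qed.

Lemma cpair_surj c : cpair (ufst c) (usnd c) = c.
Proof.
have /andP [H1 H2] := diag_spec c.
rewrite cpairE /usnd /ufst; rewrite triS in H2.
have -> : c - tri (diag c) + (diag c - (c - tri (diag c))) = diag c by lia.
lia.
Qed.

Lemma cpair_geL a b : a <= cpair a b. Proof. rewrite cpairE; lia. Qed.
Lemma cpair_geR a b : b <= cpair a b.
Proof. rewrite cpairE; have := tri_ge (a + b); lia. Qed.
Lemma cpair_inj a b a' b' : cpair a b = cpair a' b' -> a = a' /\ b = b'.
Proof. move=> E; have := congr1 ufst E; have := congr1 usnd E; by rewrite !ufst_cpair !usnd_cpair. Qed.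

Lemma c_ufst a F : cmp a F -> cmp a (fun v => ufst (F v)).
Proof. move=> HF; rewrite /ufst; cmpt; apply: c_tri; apply: c_diag; cmpt. Qed.
Lemma c_usnd a F : cmp a F -> cmp a (fun v => usnd (F v)).
Proof. move=> HF; rewrite /usnd; cmpt; [apply: c_diag; cmpt| apply: c_ufst; cmpt]. Qed.
Lemma c_cpair a F G : cmp a F -> cmp a G -> cmp a (fun v => cpair (F v) (G v)).
Proof.
move=> HF HG; apply: (@c_ext _ _ (fun v => tri (F v + G v) + F v)); first by move=> v _; rewrite cpairE.
cmpt; apply: c_tri; cmpt.
Qed.

Fixpoint enc (s : seq nat) : nat := if s is x :: s' then (cpair x (enc s')).+1 else 0.
Definition hd_c c := ufst c.-1.
Definition tl_c c := usnd c.-1.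
Definition nthc i c := hd_c (iter i tl_c c).

Lemma ufst0 : ufst 0 = 0. Proof. by []. Qed.
Lemma usnd0 : usnd 0 = 0. Proof. by []. Qed.

Lemma nthc_enc i s : nthc i (enc s) = nth 0 s i.
Proof.
have I0 : forall j, iter j tl_c 0 = 0 by elim=> //= j ->.
rewrite /nthc; elim: s i => [|x s IH] [|i] //=.
- by rewrite I0.
- by rewrite /hd_c -pred_Sn ufst_cpair.
- by rewrite -iterS iterSr {2}/tl_c -pred_Sn usnd_cpair IH.
Qed.

Lemma c_hd a F : cmp a F -> cmp a (fun v => hd_c (F v)).
Proof. move=> HF; rewrite /hd_c; apply: c_ufst; cmpt. Qed.
Lemma c_tl a F : cmp a F -> cmp a (fun v => tl_c (F v)).
Proof. move=> HF; rewrite /tl_c; apply: c_usnd; cmpt. Qed.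
Lemma c_nthc a I C : cmp a I -> cmp a C -> cmp a (fun v => nthc (I v) (C v)).
Proof. move=> HI HC; rewrite /nthc; apply: c_hd; apply: c_iter => //; apply: c_tl; cmpt. Qed.
Lemma c_enc_cons a F G : cmp a F -> cmp a G -> cmp a (fun v => (cpair (F v) (G v)).+1).
Proof. move=> HF HG; cmpt; exact: c_cpair. Qed.

Ltac cmpt_ext ::= lazymatch goal with
 | |- cmp _ (fun _ => nthc _ _) => apply c_nthc
 | |- cmp _ (fun _ => hd_c _) => apply c_hd
 | |- cmp _ (fun _ => tl_c _) => apply c_tl
 | |- cmp _ (fun _ => cpair _ _) => apply c_cpair
 | |- cmp _ (fun _ => ufst _) => apply c_ufst
 | |- cmp _ (fun _ => usnd _) => apply c_usnd
 | |- cmp _ (fun _ => tri _) => apply c_tri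
 | |- cmp _ (fun _ => diag _) => apply c_diag
 | |- _ => cmpt_ext2
 end.


Lemma c_shift a F : cmp a F -> cmp a.+1 (fun u => F (behead u)).
Proof.
move=> HF; apply: (@c_ext _ _ (fun u => F (map (fun H => H u) [::] ++ drop 1 u))).
  by move=> u _; rewrite drop1.
apply: (@c_sub a.+1 a 1 [::] F) => //; by rewrite subn1.
Qed.

Lemma c_hsub a G H : cmp a.+1 G -> cmp a.+1 H -> cmp a.+1 (fun u => G (H u :: behead u)).
Proof.
move=> HG HH; apply: (@c_ext _ _ (fun u => G (map (fun H => H u) [:: H] ++ drop 1 u))).
  by move=> u _; rewrite drop1.
apply: (@c_sub a.+1 a.+1 1 [:: H] G) => //; last by constructor.
by rewrite subn1.
Qed.

Definition sig1 a (P : seq nat -> Prop) :=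
  exists R, cmp a.+1 R /\ forall v, size v = a -> (P v <-> exists w, R (w :: v) = 0).

Lemma S_ext a (P Q : seq nat -> Prop) : (forall v, size v = a -> (P v <-> Q v)) -> sig1 a Q -> sig1 a P.
Proof.
move=> E [R [HR HQ]]; exists R; split => // v Hv; rewrite E //; exact: HQ.
Qed.

Lemma S_dec a (P : seq nat -> Prop) R : cmp a R -> (forall v, size v = a -> (P v <-> R v = 0)) -> sig1 a P.
Proof.
move=> HR HP; exists (fun u => R (behead u)); split; first exact: c_shift.
move=> v Hv; rewrite HP //; split => [H|[]//]; by exists 0.
Qed.

Lemma S_and a P Q : sig1 a P -> sig1 a Q -> sig1 a (fun v => P v /\ Q v).
Proof.
move=> [R1 [H1 E1]] [R2 [H2 E2]].
exists (fun u => R1 (ufst (head 0 u) :: behead u) + R2 (usnd (head 0 u) :: behead u)); split.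
  apply: c_add; apply: c_hsub => //; cmpt.
move=> v Hv; rewrite E1 // E2 //; split.
  move=> [[w1 Hw1] [w2 Hw2]]; exists (cpair w1 w2) => /=; by rewrite ufst_cpair usnd_cpair Hw1 Hw2.
move=> [w /= Hw]; split; [exists (ufst w) | exists (usnd w)]; lia.
Qed.

Lemma S_or a P Q : sig1 a P -> sig1 a Q -> sig1 a (fun v => P v \/ Q v).
Proof.
move=> [R1 [H1 E1]] [R2 [H2 E2]].
exists (fun u => R1 (ufst (head 0 u) :: behead u) * R2 (usnd (head 0 u) :: behead u)); split.
  apply: c_mul; apply: c_hsub => //; cmpt.
move=> v Hv; rewrite E1 // E2 //; split.
  move=> [[w1 Hw1]|[w2 Hw2]].
    exists (cpair w1 0) => /=; by rewrite ufst_cpair usnd_cpair Hw1.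
  exists (cpair 0 w2) => /=; by rewrite ufst_cpair usnd_cpair Hw2 muln0.
move=> [w /= /eqP]; rewrite muln_eq0 => /orP [/eqP H|/eqP H]; [left|right]; eexists; exact: H.
Qed.

Lemma S_ex a P : sig1 a.+1 P -> sig1 a (fun v => exists x, P (x :: v)).
Proof.
move=> [R [HR E]].
exists (fun u => R (map (fun H => H u) [:: fun u => usnd (head 0 u); fun u => ufst (head 0 u)] ++ drop 1 u)); split.
  apply: (@c_sub a.+1 a.+2 1) => //; first by rewrite subn1.
  constructor; [cmpt | constructor; [cmpt | constructor]].
move=> v Hv; split.
  move=> [x /E]; rewrite /= Hv => -[] // w Hw; exists (cpair x w) => /=; by rewrite drop0 ufst_cpair usnd_cpair.
move=> [w /= Hw]; exists (ufst w); apply/E; first by rewrite /= Hv.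
exists (usnd w); by rewrite drop0 in Hw.
Qed.

Lemma Forall_shift a Hs : List.Forall (cmp a) Hs -> List.Forall (cmp a.+1) (map (fun H u => H (behead u)) Hs).
Proof. elim=> //= H Hs' H1 _ IH; constructor => //; exact: c_shift. Qed.

Lemma S_sub a m P Hs : sig1 m P -> List.Forall (cmp a) Hs -> size Hs = m ->
  sig1 a (fun v => P (map (fun H => H v) Hs)).
Proof.
move=> [R [HR E]] HH Hm.
exists (fun u => R (map (fun F => F u) ((fun u => nth 0 u 0) :: map (fun H u => H (behead u)) Hs))); split.
  apply: c_comp; first by constructor; [cmpt | exact: Forall_shift].
  by rewrite /= size_map Hm.
move=> v Hv; rewrite E ?size_map //=.
have Em : forall w, [seq F (w :: v) | F <- [seq (fun u : seq nat => H (behead u)) | H <- Hs]] = [seq H v | H <- Hs].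
  by move=> w; elim: (Hs) => //= H Hs' ->.
by split => -[w Hw]; exists w; rewrite ?Em in Hw *.
Qed.

Fixpoint sumK (K : nat -> seq nat -> nat) n v := if n is m.+1 then sumK K m v + K m v else 0.

Lemma sumK_PR K n v : PR (fun _ => 0) (fun u => nth 0 u 1 + K (nth 0 u 0) (drop 2 u)) n v = sumK K n v.
Proof. by elim: n => //= n ->; rewrite drop0. Qed.

Lemma sumK0 K n v : sumK K n v = 0 <-> forall z, z < n -> K z v = 0.
Proof.
elim: n => [|n IH] /=; first by split => // _ z.
split.
  move=> E z; rewrite ltnS leq_eqVlt => /orP [/eqP ->|Hz]; first lia.
  apply IH => //; lia.
move=> H; rewrite (proj2 IH); first by rewrite H.
move=> z Hz; apply: H; lia.
Qed.

Lemma S_ball a P B : sig1 a.+1 P -> cmp a B -> sig1 a (fun v => forall z, z < B v -> P (z :: v)).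
Proof.
move=> [R [HR E]] HB.
pose K z u := R (nthc z (head 0 u) :: z :: behead u).
exists (fun u => PR (fun _ => 0) (fun u => nth 0 u 1 + K (nth 0 u 0) (drop 2 u)) (B (behead u)) u); split.
  apply: c_prec; first exact: c_shift.
    cmpt.
  apply: c_add; first cmpt.
  apply: (@c_ext _ _ (fun u => R (map (fun H => H u) [:: fun u => nthc (nth 0 u 0) (nth 0 u 2); fun u => nth 0 u 0] ++ drop 3 u))).
    move=> u Hu; rewrite /K /=; congr R; case: u Hu => [|x [|y [|z u]]] //= _; by rewrite drop0.
  apply: (@c_sub a.+3 a.+2 3 [:: fun u => nthc (nth 0 u 0) (nth 0 u 2); fun u => nth 0 u 0] R);
    [by rewrite subSS subSS subSS subn0 | exact: HR | constructor; [cmpt | constructor; [cmpt | constructor]]].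
move=> v Hv; split.
  move=> H.
  have [s Hs] : exists s, forall z, z < B v -> R (nth 0 s z :: z :: v) = 0.
    elim: (B v) H => [|n IH] H; first by exists [::].
    have [s Hs] := IH (fun z Hz => H z (ltnW Hz)).
    have [w Hw] : exists w, R (w :: n :: v) = 0.
      have := H n (ltnSn n); rewrite E /= ?Hv //.
    exists (mkseq (fun z => if z < n then nth 0 s z else w) n.+1) => z Hz.
    rewrite nth_mkseq //; case: ifP => Hzn; first exact: Hs.
    have -> : z = n by lia.
    exact: Hw.
  exists (enc s) => /=; rewrite sumK_PR sumK0 => z Hz /=; by rewrite /K /= nthc_enc Hs.
move=> [W /=]; rewrite sumK_PR sumK0 => H z Hz; apply/E; first by rewrite /= Hv.
exists (nthc z W); exact: (H z Hz).
Qed.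

Lemma re_of_sig1 (P : nat -> Prop) : sig1 1 (fun v => P (head 0 v)) -> re_set P.
Proof.
move=> [R [[r Hr] E]]; exists (RMu r) => k.
have Ek := E [:: k] erefl; rewrite /= in Ek; rewrite Ek; split.
  move=> Hex.
  have Hex' : exists w, R [:: w; k] == 0 by case: Hex => w Hw; exists w; apply/eqP.
  exists (ex_minn Hex'); case: ex_minnP => y /eqP Hy Hmin.
  constructor; first by rewrite -Hy; exact: Hr.
  move=> z Hz; exists (R [:: z; k]).-1.
  have Hnz : R [:: z; k] != 0 by apply/negP => /Hmin; rewrite leqNgt Hz.
  rewrite prednK ?lt0n //; exact: Hr.
move=> [y Hy]; inversion Hy; subst; exists y.
by have := reval_det H0 (Hr [:: y; k] erefl).
Qed.

Lemma rec_of_sig1 (S : nat -> Prop) : sig1 1 (fun v => S (head 0 v)) -> sig1 1 (fun v => ~ S (head 0 v)) ->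
  recursive_set S.
Proof.
move=> [R1 [H1 E1]] [R2 [H2 E2]].
have [m Hm] : cmp 2 (fun u => R1 u * R2 u) by cmpt.
have [e He] : cmp 2 (fun u => nat_of_bool (R1 u == 0)) by cmpt.
exists (RComp e [:: RMu m; RProj 0]) => k.
have [t [Ht Hmin]] : exists t, R1 [:: t; k] * R2 [:: t; k] = 0 /\ forall z, z < t -> R1 [:: z; k] * R2 [:: z; k] != 0.
  have Hex : exists w, R1 [:: w; k] * R2 [:: w; k] == 0.
    case: (classic (S k)) => HS.
      have [w Hw] := proj1 (E1 [:: k] erefl) HS.
      by exists w; rewrite Hw.
    have [w Hw] := proj1 (E2 [:: k] erefl) HS; by exists w; rewrite Hw muln0.
  exists (ex_minn Hex); case: ex_minnP => t /eqP Ht Hmin; split => // z Hz.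
  apply/negP => /Hmin; by rewrite leqNgt Hz.
have Hev : reval (RComp e [:: RMu m; RProj 0]) [:: k] (nat_of_bool (R1 [:: t; k] == 0)).
  apply: (@ev_comp _ _ _ [:: t; k]); last exact: (He [:: t; k] erefl).
  constructor; last by constructor; [exact: (@ev_proj 0 [:: k]) | constructor].
  constructor; first by rewrite -Ht; exact: (Hm [:: t; k] erefl).
  move=> z Hz; exists (R1 [:: z; k] * R2 [:: z; k]).-1; rewrite prednK ?lt0n ?Hmin //.
  exact: (Hm [:: z; k] erefl).
case: eqP Hev => HR1 Hev.
  left; split => //; apply/(E1 [:: k] erefl); by exists t.
right; split => //; apply/(E2 [:: k] erefl); exists t.
move: Ht => /eqP; rewrite muln_eq0 => /orP [/eqP //|/eqP //].
Qed.


Lemma Forall_projs a k n : (0 < n -> n + k <= a) -> List.Forall (cmp a) (mkseq (fun j v => nth 0 v (k + j)) n).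
Proof.
move=> H; rewrite /mkseq; apply: Forall_map => j Hj; apply: c_proj.
have : j \in iota 0 n.
  elim: (iota 0 n) Hj => //= x s IH [->|/IH]; rewrite inE ?eqxx // => ->; by rewrite orbT.
rewrite mem_iota => Hjn; have : 0 < n by lia. move/H; lia.
Qed.

Lemma S_subd a m k P Hs : sig1 m P -> List.Forall (cmp a) Hs -> size Hs + (a - k) = m ->
  sig1 a (fun v => P (map (fun H => H v) Hs ++ drop k v)).
Proof.
move=> HP HH Hm.
have := @S_sub a m P (Hs ++ mkseq (fun j v => nth 0 v (k + j)) (a - k)) HP.
move/(_ _ _) => H; apply: S_ext (H _ _).
- move=> v Hv; by rewrite map_cat drop_mk Hv /mkseq -map_comp.
- apply List.Forall_app; split => //; apply: Forall_projs; lia.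
- by rewrite size_cat size_mkseq.
Qed.

Lemma S_conj b (Ps : nat -> seq nat -> Prop) m : (forall j, j < m -> sig1 b (Ps j)) ->
  sig1 b (fun u => forall j, j < m -> Ps j u).
Proof.
elim: m => [|m IH] H.
  apply: (@S_dec _ _ (fun _ => 0)); first cmpt. by move=> v _; split => // _ j.
apply: (@S_ext _ _ (fun u => (forall j, j < m -> Ps j u) /\ Ps m u)).
  move=> v _; split.
    move=> Hj; split; [move=> j Hjm; apply: Hj; lia | exact: Hj].
  move=> [H1 H2] j; rewrite ltnS leq_eqVlt => /orP [/eqP -> //|]; exact: H1.
apply: S_and; [apply: IH => j Hj; apply: H; lia | exact: H].
Qed.

Definition NF f := forall a, sig1 a.+1 (fun u => reval f (behead u) (head 0 u)).

Lemma recfun_ind' (P : recfun -> Prop) :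
 P RZero -> P RSucc -> (forall i, P (RProj i)) ->
 (forall f gs, P f -> List.Forall P gs -> P (RComp f gs)) ->
 (forall f g, P f -> P g -> P (RRec f g)) -> (forall f, P f -> P (RMu f)) -> forall f, P f.
Proof.
move=> H0 H1 H2 H3 H4 H5; fix IH 1 => f; case: f => [||i|f gs|f g|f].
- exact: H0.
- exact: H1.
- exact: H2.
- apply: H3; first exact: IH.
  elim: gs => [|g gs IHgs]; constructor; [exact: IH | exact: IHgs].
- apply: H4; exact: IH.
- apply: H5; exact: IH.
Qed.

Lemma Forall_nth (T : Type) (P : T -> Prop) (d : T) s j : List.Forall P s -> j < size s -> P (nth d s j).
Proof. move=> H; elim: H j => //= x s' Hx _ IH [|j] //= Hj; exact: IH. Qed.

Lemma mkseqS (T : Type) (F : nat -> T) n : mkseq F n.+1 = F 0 :: mkseq (fun j => F j.+1) n.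
Proof. by rewrite /mkseq /= -[1]addn0 iotaDl -map_comp. Qed.

Lemma Forall2_mk (Q : recfun -> nat -> Prop) gs F :
  (forall j, j < size gs -> Q (nth RZero gs j) (F j)) -> List.Forall2 Q gs (mkseq F (size gs)).
Proof.
elim: gs F => [|g gs IH] F H /=; first by constructor.
rewrite mkseqS; constructor; first exact: (H 0).
apply: IH => j Hj; exact: (H j.+1).
Qed.

Lemma Forall2_nth (Q : recfun -> nat -> Prop) gs ys :
  List.Forall2 Q gs ys -> size ys = size gs /\ forall j, j < size gs -> Q (nth RZero gs j) (nth 0 ys j).
Proof.
elim=> //= g y gs' ys' Hq _ [-> IH]; split => // -[|j] //= Hj; exact: IH.
Qed.

Lemma S_decb a (P : seq nat -> Prop) (b : seq nat -> bool) :
  cmp a (fun v => nat_of_bool (b v)) -> (forall v, size v = a -> (P v <-> b v)) -> sig1 a P.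
Proof.
move=> Hb HP; apply: (@S_dec _ _ (fun v => nat_of_bool (~~ b v))); first exact: c_negb.
move=> v Hv; rewrite HP //; by case: (b v).
Qed.

Lemma NF_zero : NF RZero.
Proof.
move=> a; apply: (@S_decb _ _ (fun u => head 0 u == 0)); first cmpt.
move=> [|y v] //= _; split; first by move=> H; inversion H.
by move/eqP ->; constructor.
Qed.

Lemma NF_succ : NF RSucc.
Proof.
case=> [|b].
  apply: (@S_decb _ _ (fun _ => false)); first cmpt.
  by move=> [|y [|x v]] //= _; split => // H; inversion H.
apply: (@S_decb _ _ (fun u => head 0 u == (nth 0 u 1).+1)); first cmpt.
move=> [|y [|x v]] //= _; split; first by move=> H; inversion H.
by move/eqP ->; constructor.
Qed.

Lemma NF_proj i : NF (RProj i).
Proof.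
move=> a; case: (ltnP i a) => Hi.
  apply: (@S_decb _ _ (fun u => head 0 u == nth 0 u i.+1)); first cmpt.
  move=> [|y v] //= [Hv]; split; first by move=> H; inversion H; subst.
  move/eqP ->; constructor; lia.
apply: (@S_decb _ _ (fun _ => false)); first cmpt.
move=> [|y v] //= [Hv]; split => // H; inversion H; lia.
Qed.

Lemma NF_comp f gs : NF f -> List.Forall NF gs -> NF (RComp f gs).
Proof.
move=> Hf Hgs a; set m := size gs.
pose P w := (forall j, j < m -> reval (nth RZero gs j) (behead (behead w)) (nthc j (head 0 w))) /\
            reval f (mkseq (fun j => nthc j (head 0 w)) m) (nth 0 w 1).
apply: (@S_ext _ _ (fun u => exists Y, P (Y :: u))); last apply: S_ex; last apply: S_and.
- move=> [|y v] //= [Hv]; rewrite /P /=; split.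
    move=> H; inversion H; subst.
    have [Hsz Hj] := Forall2_nth H2.
    exists (enc ys); split.
      move=> j Hjm; rewrite nthc_enc; exact: Hj.
    rewrite (eq_mkseq (g := nth 0 ys) (fun j => nthc_enc j ys)) /m -Hsz mkseq_nth //.
  move=> [Y [H1 H2]]; apply: (@ev_comp _ _ _ (mkseq (fun j => nthc j Y) m)) => //.
  exact: Forall2_mk.
- apply: S_conj => j Hj.
  have := Forall_nth RZero Hgs Hj => /(_ a) Hg.
  apply: (S_ext _ (@S_subd a.+2 a.+1 2 _ [:: fun w => nthc j (head 0 w)] Hg _ _)).
  + by move=> [|x [|y v]] //=; rewrite drop0.
  + constructor; [cmpt | constructor].
  + by rewrite /= add1n subn2.
- have Hf' := Hf m.
  apply: (S_ext _ (@S_subd a.+2 m.+1 a.+2 _ ((fun w => nth 0 w 1) :: mkseq (fun j w => nthc j (head 0 w)) m) Hf' _ _)).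
  + move=> w Hw /=; rewrite drop_oversize ?Hw // cats0 /mkseq -map_comp //.
  + constructor; first cmpt.
    rewrite /mkseq; apply: Forall_map => j _; cmpt.
  + by rewrite /= size_mkseq subnn addn0.
Qed.

Lemma rec_char f g n v y : reval (RRec f g) (n :: v) y <->
  exists h : nat -> nat, [/\ reval f v (h 0), (forall i, i < n -> reval g (i :: h i :: v) (h i.+1)) & y = h n].
Proof.
split.
  elim: n y => [|n IH] y H; inversion H; subst.
    by exists (fun _ => y).
  have [h [H1 H2 H3]] := IH _ H5.
  exists (fun i => if i <= n then h i else y); split => //.
    move=> i Hi; have Hin : i <= n by lia.
    rewrite Hin; case: (ltnP i n) => Hl; first exact: H2.
    have Ei : i = n by lia.
    by subst i; rewrite -H3.
  by rewrite ltnn.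
move=> [h [H1 H2 ->]]; elim: n H2 => [|n IH] H2; first by constructor.
apply: ev_recS; first by apply: IH => i Hi; apply: H2; lia.
exact: H2.
Qed.

Lemma NF_rec f g : NF f -> NF g -> NF (RRec f g).
Proof.
move=> Hf Hg [|b].
  apply: (@S_decb _ _ (fun _ => false)); first cmpt.
  by move=> [|y [|x v]] //= _; split => // H; inversion H.
pose P w := [/\ reval f (drop 3 w) (nthc 0 (head 0 w)),
   (forall i, i < nth 0 w 2 -> reval g (i :: nthc i (head 0 w) :: drop 3 w) (nthc i.+1 (head 0 w))) &
   nth 0 w 1 = nthc (nth 0 w 2) (head 0 w)].
apply: (@S_ext _ _ (fun u => exists S, P (S :: u))); last apply: S_ex.
  move=> [|y [|n v]] //= _; rewrite rec_char /P /= drop0; split.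
    move=> [h [H1 H2 H3]]; exists (enc (mkseq h n.+1)).
    rewrite !nthc_enc !nth_mkseq //; split => //.
    move=> i Hi; rewrite !nthc_enc !nth_mkseq; [exact: H2 | lia | lia].
  move=> [S [H1 H2 H3]]; exists (fun i => nthc i S); split => //.
apply: (@S_ext _ _ (fun w => (reval f (drop 3 w) (nthc 0 (head 0 w)) /\
   (forall i, i < nth 0 w 2 -> reval g (i :: nthc i (head 0 w) :: drop 3 w) (nthc i.+1 (head 0 w)))) /\
   nth 0 w 1 = nthc (nth 0 w 2) (head 0 w))).
  by move=> w _; rewrite /P; split => [[]|[[]]].
apply: S_and; first apply: S_and.
- apply: (S_ext _ (@S_subd b.+3 b.+1 3 _ [:: fun w => nthc 0 (head 0 w)] (Hf b) _ _)).
  + by move=> w _.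
  + constructor; [cmpt | constructor].
  + by rewrite /= add1n subSS subSS subSS subn0.
- apply: (@S_ball _ (fun x => reval g (nth 0 x 0 :: nthc (nth 0 x 0) (nth 0 x 1) :: drop 4 x) (nthc (nth 0 x 0).+1 (nth 0 x 1)))); last cmpt.
  apply: (S_ext _ (@S_subd b.+4 b.+3 4 _
     [:: fun x => nthc (nth 0 x 0).+1 (nth 0 x 1); fun x => nth 0 x 0; fun x => nthc (nth 0 x 0) (nth 0 x 1)] (Hg b.+2) _ _)).
  + by move=> x _.
  + constructor; [cmpt | constructor; [cmpt | constructor; [cmpt | constructor]]].
  + by rewrite /= subSS subSS subSS subSS subn0.
- apply: (@S_decb _ _ (fun w => nth 0 w 1 == nthc (nth 0 w 2) (head 0 w))); first cmpt.
  by move=> w _; split => [->|/eqP].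
Qed.

Lemma NF_mu f : NF f -> NF (RMu f).
Proof.
move=> Hf a.
apply: (@S_ext _ _ (fun u => reval f (head 0 u :: behead u) 0 /\
   (forall z, z < head 0 u -> exists m, reval f (z :: behead u) m.+1))).
  move=> [|y v] //= _; split; first by move=> H; inversion H.
  by move=> [H1 H2]; constructor.
apply: S_and.
- apply: (S_ext _ (@S_subd a.+1 a.+2 1 _ [:: fun _ => 0; fun u => head 0 u] (Hf a.+1) _ _)).
  + by move=> [|y v] //= _; rewrite drop0.
  + constructor; [cmpt | constructor; [cmpt | constructor]].
  + by rewrite /= subn1.
- apply: (@S_ext _ _ (fun u => forall z, z < head 0 u ->
     (fun x => exists m, reval f (nth 0 x 0 :: drop 2 x) m.+1) (z :: u))).
    by move=> [|y v] //= _; rewrite drop0.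
  apply: (@S_ball _ (fun x => exists m, reval f (nth 0 x 0 :: drop 2 x) m.+1) (head 0)); last cmpt.
  apply: (@S_ext _ _ (fun x => exists m, (fun x' => reval f (nth 0 x' 1 :: drop 3 x') (nth 0 x' 0).+1) (m :: x))).
    by move=> [|z [|y v]].
  apply: (@S_ex _ (fun x' => reval f (nth 0 x' 1 :: drop 3 x') (nth 0 x' 0).+1)).
  apply: (S_ext _ (@S_subd a.+3 a.+2 3 _ [:: fun x => (nth 0 x 0).+1; fun x => nth 0 x 1] (Hf a.+1) _ _)).
  + by move=> x _.
  + constructor; [cmpt | constructor; [cmpt | constructor]].
  + by rewrite /= subSS subSS subSS subn0.
Qed.

Theorem normal_form f : NF f.
Proof.
elim/recfun_ind': f.
- exact: NF_zero.
- exact: NF_succ.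
- exact: NF_proj.
- move=> f gs Hf Hgs; exact: NF_comp.
- move=> f g Hf Hg; exact: NF_rec.
- move=> f Hf; exact: NF_mu.
Qed.

Lemma re_sig1 (P : nat -> Prop) : re_set P -> sig1 1 (fun v => P (head 0 v)).
Proof.
move=> [f Hf].
apply: (@S_ext _ _ (fun v => exists y, reval f [:: head 0 v] y)).
  by move=> [|k [|x v]] //= _; rewrite Hf.
apply: (@S_ex _ (fun u => reval f [:: nth 0 u 1] (head 0 u))); apply: (S_ext _ (@S_subd 2 2 1 _ [:: fun u => nth 0 u 0] (normal_form f 1) _ _)).
- by move=> [|y [|k [|x v]]].
- constructor; [cmpt | constructor].
- by [].
Qed.


Import GRing.Theory Num.Theory.

Definition rnum1 r := ufst (ufst r).
Definition rnum2 r := usnd (ufst r).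
Definition rden r := (usnd r).+1.
Definition rat_of (r : nat) : rat := (((rnum1 r)%:R - (rnum2 r)%:R) / (rden r)%:R)%R.
Definition rmk p q D := cpair (cpair p q) D.-1.

Lemma rat_of_mk p q D : 0 < D -> rat_of (rmk p q D) = ((p%:R - q%:R) / D%:R)%R.
Proof. by move=> HD; rewrite /rat_of /rmk /rnum1 /rnum2 /rden !ufst_cpair !usnd_cpair prednK. Qed.

Definition radd r1 r2 := rmk (rnum1 r1 * rden r2 + rnum1 r2 * rden r1) (rnum2 r1 * rden r2 + rnum2 r2 * rden r1)
   (rden r1 * rden r2).
Definition rmul r1 r2 := rmk (rnum1 r1 * rnum1 r2 + rnum2 r1 * rnum2 r2) (rnum1 r1 * rnum2 r2 + rnum2 r1 * rnum1 r2)
   (rden r1 * rden r2).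

Lemma rden_gt0 r : 0 < rden r. Proof. by []. Qed.

Lemma rden_neq0 r : ((rden r)%:R : rat) != 0%R.
Proof. by rewrite pnatr_eq0. Qed.

Lemma rat_of_add r1 r2 : rat_of (radd r1 r2) = (rat_of r1 + rat_of r2)%R.
Proof.
rewrite /radd rat_of_mk ?muln_gt0 // /rat_of !natrD !natrM.
have H1 := rden_neq0 r1; have H2 := rden_neq0 r2.
field; by apply/andP.
Qed.

Lemma rat_of_mul r1 r2 : rat_of (rmul r1 r2) = (rat_of r1 * rat_of r2)%R.
Proof.
rewrite /rmul rat_of_mk ?muln_gt0 // /rat_of !natrD !natrM.
have H1 := rden_neq0 r1; have H2 := rden_neq0 r2.
field; by apply/andP.
Qed.

Lemma rat_of_eq0 r : (rat_of r == 0%R) = (rnum1 r == rnum2 r).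
Proof.
rewrite /rat_of mulf_eq0 invr_eq0 (negbTE (rden_neq0 r)) orbF subr_eq0.
by rewrite eqr_nat.
Qed.

Definition intp (z : int) := match z with Posz n => n | Negz _ => 0 end.
Definition intn (z : int) := match z with Posz _ => 0 | Negz n => n.+1 end.
Lemma intpn z : ((intp z)%:R - (intn z)%:R = z%:~R :> rat)%R.
Proof. case: z => n /=; first by rewrite subr0. by rewrite NegzE mulrNz sub0r. Qed.

Definition rcode_of (q : rat) := rmk (intp (numq q)) (intn (numq q)) `|denq q|%N.

Lemma rcode_ofK q : rat_of (rcode_of q) = q.
Proof.
rewrite /rcode_of rat_of_mk; last by rewrite absz_gt0 denq_neq0.
rewrite intpn -[X in _ = X]divq_num_den; congr (_ / _)%R.
by rewrite -[in RHS]absz_denq.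
Qed.

Lemma c_mod4 a F : cmp a F -> cmp a (fun v => F v %% 4).
Proof.
apply: (@c_app1 a (fun x => x %% 4)); apply: (@c_ext _ _ (fun v => PR (fun _ => 0)
   (fun u => if (nth 0 u 1).+1 == 4 then 0 else (nth 0 u 1).+1) (nth 0 v 0) v)).
  move=> v _; elim: (nth 0 v 0) => [|n IH]; first by [].
  have -> : n.+1 %% 4 = if (n %% 4).+1 == 4 then 0 else (n %% 4).+1 by case: eqP => H; lia.
  by rewrite IH.
apply: c_prec; cmpt.
Qed.

Lemma c_div4 a F : cmp a F -> cmp a (fun v => F v %/ 4).
Proof.
apply: (@c_app1 a (fun x => x %/ 4)); apply: (@c_ext _ _ (fun v => PR (fun _ => 0)
   (fun u => if (nth 0 u 0 %% 4).+1 == 4 then (nth 0 u 1).+1 else nth 0 u 1) (nth 0 v 0) v)).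
  move=> v _; elim: (nth 0 v 0) => [|n IH]; first by [].
  have -> : n.+1 %/ 4 = if (n %% 4).+1 == 4 then (n %/ 4).+1 else n %/ 4 by case: eqP => H; lia.
  by rewrite IH.
apply: c_prec; cmpt; apply: c_mod4; cmpt.
Qed.

Lemma c_odd a F : cmp a F -> cmp a (fun v => nat_of_bool (odd (F v))).
Proof.
apply: (@c_app1 a (fun x => nat_of_bool (odd x))); apply: (@c_ext _ _ (fun v => PR (fun _ => 0)
   (fun u => 1 - nth 0 u 1) (nth 0 v 0) v)).
  move=> v _; elim: (nth 0 v 0) => [|n IH]; first by [].
  rewrite /= -IH; by case: (odd n).
apply: c_prec; cmpt.
Qed.

Lemma c_half a F : cmp a F -> cmp a (fun v => (F v)./2).
Proof.
apply: (@c_app1 a (fun x => x./2)); apply: (@c_ext _ _ (fun v => PR (fun _ => 0)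
   (fun u => if odd (nth 0 u 0) then (nth 0 u 1).+1 else nth 0 u 1) (nth 0 v 0) v)).
  move=> v _; elim: (nth 0 v 0) => [|n IH]; first by [].
  have -> : n.+1./2 = if odd n then (n./2).+1 else n./2 by rewrite -uphalfE uphalf_half; case: (odd n).
  by rewrite IH.
apply: c_prec; cmpt; apply: c_odd; cmpt.
Qed.

Lemma c_rmk a P Q D : cmp a P -> cmp a Q -> cmp a D -> cmp a (fun v => rmk (P v) (Q v) (D v)).
Proof. move=> *; rewrite /rmk; cmpt. Qed.
Lemma c_radd a F G : cmp a F -> cmp a G -> cmp a (fun v => radd (F v) (G v)).
Proof. move=> *; rewrite /radd /rnum1 /rnum2 /rden; apply: c_rmk; cmpt. Qed.
Lemma c_rmul a F G : cmp a F -> cmp a G -> cmp a (fun v => rmul (F v) (G v)).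
Proof. move=> *; rewrite /rmul /rnum1 /rnum2 /rden; apply: c_rmk; cmpt. Qed.

Ltac cmpt_ext2 ::= lazymatch goal with
 | |- cmp _ (fun _ => radd _ _) => apply c_radd
 | |- cmp _ (fun _ => rmul _ _) => apply c_rmul
 | |- cmp _ (fun _ => rmk _ _ _) => apply c_rmk
 | |- cmp _ (fun _ => _ %% 4) => apply c_mod4
 | |- cmp _ (fun _ => _ %/ 4) => apply c_div4
 | |- cmp _ (fun _ => (_)./2) => apply c_half
 | |- cmp _ (fun _ => nat_of_bool (odd _)) => apply c_odd
 end.

Fixpoint tabl (St : seq nat -> nat) c v : seq nat :=
  if c is c'.+1 then St (c' :: enc (tabl St c' v) :: v) :: tabl St c' v else [::].
Definition cov St c v := St (c :: enc (tabl St c v) :: v).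

Lemma cov_look St c v j : j < c -> nthc (c.-1 - j) (enc (tabl St c v)) = cov St j v.
Proof.
rewrite nthc_enc; elim: c => // c IH; rewrite ltnS leq_eqVlt => /orP [/eqP ->|Hj] /=.
  by rewrite subnn.
have -> : c - j = (c.-1 - j).+1 by lia.
exact: IH.
Qed.

Lemma c_cov a St : cmp a.+2 St -> cmp a.+1 (fun u => cov St (head 0 u) (behead u)).
Proof.
move=> HS.
have HT : cmp a.+1 (fun u => enc (tabl St (head 0 u) (behead u))).
  apply: (@c_ext _ _ (fun u => PR (fun _ => 0)
    (fun w => (cpair (St (nth 0 w 0 :: nth 0 w 1 :: drop 3 w)) (nth 0 w 1)).+1) (head 0 u) u)).
    move=> u _; elim: (head 0 u) => //= n <-; case: u => //= y v; by rewrite drop0.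
  apply: c_prec; cmpt.
  apply: (@c_sub a.+3 a.+2 3 [:: fun w => nth 0 w 0; fun w => nth 0 w 1] St);
    [by rewrite subSS subSS subSS subn0 | exact: HS | constructor; [cmpt | constructor; [cmpt|constructor]]].
apply: (@c_ext _ _ (fun u => St (map (fun H => H u) [:: fun u => head 0 u; fun u => enc (tabl St (head 0 u) (behead u))] ++ drop 1 u))).
  by move=> [|y v] //= _; rewrite drop0.
apply: (@c_sub a.+1 a.+2 1 _ St); [by rewrite subn1 | exact: HS | constructor; [cmpt | constructor; [exact: HT|constructor]]].
Qed.

Definition const_r pl := if odd pl then rmk 0 (pl./2).+1 1 else rmk (pl./2) 0 1.
Definition look c t j := nthc (c.-1 - j) t.

Definition Ev_step (u : seq nat) : nat :=
  if nth 0 u 0 %% 4 == 0 then nthc (nth 0 u 0 %/ 4) (nth 0 u 2)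
  else if nth 0 u 0 %% 4 == 1 then const_r (nth 0 u 0 %/ 4)
  else if nth 0 u 0 %% 4 == 2 then radd (look (nth 0 u 0) (nth 0 u 1) (ufst (nth 0 u 0 %/ 4)))
                                        (look (nth 0 u 0) (nth 0 u 1) (usnd (nth 0 u 0 %/ 4)))
  else rmul (look (nth 0 u 0) (nth 0 u 1) (ufst (nth 0 u 0 %/ 4)))
            (look (nth 0 u 0) (nth 0 u 1) (usnd (nth 0 u 0 %/ 4))).

Definition Wf_step (u : seq nat) : nat :=
  if nth 0 u 0 %% 4 == 0 then nat_of_bool (nth 0 u 0 %/ 4 < nth 0 u 2)
  else if nth 0 u 0 %% 4 == 1 then 1
  else look (nth 0 u 0) (nth 0 u 1) (ufst (nth 0 u 0 %/ 4)) *
       look (nth 0 u 0) (nth 0 u 1) (usnd (nth 0 u 0 %/ 4)).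

Definition Ev c xs := cov Ev_step c [:: xs].
Definition Wf c n := cov Wf_step c [:: n].

Lemma c_const_r a F : cmp a F -> cmp a (fun v => const_r (F v)).
Proof. move=> HF; rewrite /const_r; cmpt. Qed.
Lemma c_look a C T J : cmp a C -> cmp a T -> cmp a J -> cmp a (fun v => look (C v) (T v) (J v)).
Proof. move=> *; rewrite /look; cmpt. Qed.

Ltac cmpt_ext2 ::= lazymatch goal with
 | |- cmp _ (fun _ => radd _ _) => apply c_radd
 | |- cmp _ (fun _ => rmul _ _) => apply c_rmul
 | |- cmp _ (fun _ => rmk _ _ _) => apply c_rmk
 | |- cmp _ (fun _ => _ %% 4) => apply c_mod4
 | |- cmp _ (fun _ => _ %/ 4) => apply c_div4
 | |- cmp _ (fun _ => (_)./2) => apply c_half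
 | |- cmp _ (fun _ => nat_of_bool (odd _)) => apply c_odd
 | |- cmp _ (fun _ => look _ _ _) => apply c_look
 | |- cmp _ (fun _ => const_r _) => apply c_const_r
 end.

Lemma c_Ev a C X : cmp a C -> cmp a X -> cmp a (fun v => Ev (C v) (X v)).
Proof.
move=> HC HX.
have H : cmp 2 (fun u => Ev (nth 0 u 0) (nth 0 u 1)).
  apply: (@c_ext _ _ (fun u => cov Ev_step (head 0 u) (behead u))).
    by move=> [|c [|x [|y u]]].
  apply: c_cov; rewrite /Ev_step; cmpt.
exact: (c_app2 H).
Qed.

Lemma c_Wf a C X : cmp a C -> cmp a X -> cmp a (fun v => Wf (C v) (X v)).
Proof.
move=> HC HX.
have H : cmp 2 (fun u => Wf (nth 0 u 0) (nth 0 u 1)).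
  apply: (@c_ext _ _ (fun u => cov Wf_step (head 0 u) (behead u))).
    by move=> [|c [|x [|y u]]].
  apply: c_cov; rewrite /Wf_step; cmpt.
exact: (c_app2 H).
Qed.

Lemma Ev_E c xs : Ev c xs =
  if c %% 4 == 0 then nthc (c %/ 4) xs
  else if c %% 4 == 1 then const_r (c %/ 4)
  else if c %% 4 == 2 then radd (look c (enc (tabl Ev_step c [:: xs])) (ufst (c %/ 4)))
                                (look c (enc (tabl Ev_step c [:: xs])) (usnd (c %/ 4)))
  else rmul (look c (enc (tabl Ev_step c [:: xs])) (ufst (c %/ 4)))
            (look c (enc (tabl Ev_step c [:: xs])) (usnd (c %/ 4))).
Proof. by []. Qed.

Lemma Wf_E c n : Wf c n =
  if c %% 4 == 0 then nat_of_bool (c %/ 4 < n)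
  else if c %% 4 == 1 then 1
  else look c (enc (tabl Wf_step c [:: n])) (ufst (c %/ 4)) *
       look c (enc (tabl Wf_step c [:: n])) (usnd (c %/ 4)).
Proof. by []. Qed.

Lemma look_Ev c xs j : j < c -> look c (enc (tabl Ev_step c [:: xs])) j = Ev j xs.
Proof. exact: cov_look. Qed.
Lemma look_Wf c n j : j < c -> look c (enc (tabl Wf_step c [:: n])) j = Wf j n.
Proof. exact: cov_look. Qed.

Lemma code_bin p q k : k < 4 -> (4 * cpair p q + k) %% 4 = k /\ (4 * cpair p q + k) %/ 4 = cpair p q.
Proof. move=> Hk; split; lia. Qed.

Lemma code_lt p q k : p < 4 * cpair p q + k.+2 /\ q < 4 * cpair p q + k.+2.
Proof. have := cpair_geL p q; have := cpair_geR p q; lia. Qed.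

Lemma const_rE z : rat_of (const_r (code_int z)) = (z%:~R)%R.
Proof.
case: z => k /=; rewrite /const_r.
  rewrite odd_double doubleK rat_of_mk // subr0 divr1 //.
have H : (k.*2.+1)./2 = k by rewrite -uphalfE uphalf_double.
rewrite H /= odd_double /= rat_of_mk // sub0r divr1 NegzE mulrNz.
by [].
Qed.

Lemma Ev_correct n (x : n.-tuple rat) xs p : zpoly_wf n p ->
  (forall i, i < n -> nth 0%R x i = rat_of (nthc i xs)) ->
  rat_of (Ev (code_zpoly p) xs) = zpoly_eval x p.
Proof.
move=> Hwf Hx; elim: p Hwf => [i|z|p IHp q IHq|p IHp q IHq] /= Hwf.
- rewrite Ev_E.
  have -> : (4 * i) %% 4 = 0 by lia.
  have -> : (4 * i) %/ 4 = i by lia.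
  by rewrite /= Hx.
- rewrite Ev_E.
  have -> : (4 * code_int z + 1) %% 4 = 1 by lia.
  have -> : (4 * code_int z + 1) %/ 4 = code_int z by lia.
  by rewrite /= const_rE.
- have [H1 H2] := @code_bin (code_zpoly p) (code_zpoly q) 2 isT.
  have [L1 L2] := @code_lt (code_zpoly p) (code_zpoly q) 0.
  move/andP: Hwf => [Wp Wq].
  rewrite Ev_E H1 H2 /= ufst_cpair usnd_cpair !look_Ev // rat_of_add IHp // IHq //.
- have [H1 H2] := @code_bin (code_zpoly p) (code_zpoly q) 3 isT.
  have [L1 L2] := @code_lt (code_zpoly p) (code_zpoly q) 1.
  move/andP: Hwf => [Wp Wq].
  rewrite Ev_E H1 H2 /= ufst_cpair usnd_cpair !look_Ev // rat_of_mul IHp // IHq //.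
Qed.

Lemma Wf_correct n p : Wf (code_zpoly p) n = nat_of_bool (zpoly_wf n p).
Proof.
elim: p => [i|z|p IHp q IHq|p IHp q IHq] /=.
- rewrite Wf_E.
  have -> : (4 * i) %% 4 = 0 by lia.
  by have -> : (4 * i) %/ 4 = i by lia.
- rewrite Wf_E.
  by have -> : (4 * code_int z + 1) %% 4 = 1 by lia.
- have [H1 H2] := @code_bin (code_zpoly p) (code_zpoly q) 2 isT.
  have [L1 L2] := @code_lt (code_zpoly p) (code_zpoly q) 0.
  rewrite Wf_E H1 H2 /= ufst_cpair usnd_cpair !look_Wf // IHp IHq.
  by case: (zpoly_wf n p); case: (zpoly_wf n q).
- have [H1 H2] := @code_bin (code_zpoly p) (code_zpoly q) 3 isT.
  have [L1 L2] := @code_lt (code_zpoly p) (code_zpoly q) 1.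
  rewrite Wf_E H1 H2 /= ufst_cpair usnd_cpair !look_Wf // IHp IHq.
  by case: (zpoly_wf n p); case: (zpoly_wf n q).
Qed.

Lemma code_int_surj k : exists z, code_int z = k.
Proof.
case Ho: (odd k).
  exists (Negz k./2) => /=; rewrite -[RHS](odd_double_half k) Ho; lia.
exists (Posz k./2) => /=; rewrite -[RHS](odd_double_half k) Ho; lia.
Qed.

Lemma code_surj c : exists p, code_zpoly p = c.
Proof.
elim: c {-2}c (leqnn c) => [|m IH] c Hc.
  by exists (PVar 0); have -> : c = 0 by lia.
have Hc4 : c = 4 * (c %/ 4) + c %% 4 by lia.
have : c %% 4 < 4 by lia.
move: (c %% 4) Hc4 => r Hc4; case: r Hc4 => [|[|[|[|r]]]] Hc4 // _.
  by exists (PVar (c %/ 4)) => /=; lia.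
- have [z Hz] := code_int_surj (c %/ 4); by exists (PConst z) => /=; rewrite Hz; lia.
- have E := cpair_surj (c %/ 4).
  have := cpair_geL (ufst (c %/ 4)) (usnd (c %/ 4)); have := cpair_geR (ufst (c %/ 4)) (usnd (c %/ 4)).
  rewrite E => G1 G2.
  have [p Hp] := IH (ufst (c %/ 4)) ltac:(lia); have [q Hq] := IH (usnd (c %/ 4)) ltac:(lia).
  by exists (PAdd p q) => /=; rewrite Hp Hq E; lia.
- have E := cpair_surj (c %/ 4).
  have := cpair_geL (ufst (c %/ 4)) (usnd (c %/ 4)); have := cpair_geR (ufst (c %/ 4)) (usnd (c %/ 4)).
  rewrite E => G1 G2.
  have [p Hp] := IH (ufst (c %/ 4)) ltac:(lia); have [q Hq] := IH (usnd (c %/ 4)) ltac:(lia).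
  by exists (PMul p q) => /=; rewrite Hp Hq E; lia.
Qed.

Lemma code_zpoly_inj p q : code_zpoly p = code_zpoly q -> p = q.
Proof.
elim: p q => [i|z|p IHp p' IHp'|p IHp p' IHp'] [j|w|q q'|q q'] /= E; try lia.
- by have -> : i = j by lia.
- have E' : code_int z = code_int w by lia.
  clear E; case: z E' => k; case: w => k' /= E'; first [by have -> : k = k' by lia | exfalso; lia].
- have [/IHp -> /IHp' ->] : code_zpoly p = code_zpoly q /\ code_zpoly p' = code_zpoly q'.
    apply: cpair_inj; lia.
  by [].
- have [/IHp -> /IHp' ->] : code_zpoly p = code_zpoly q /\ code_zpoly p' = code_zpoly q'.
    apply: cpair_inj; lia.
  by [].
Qed.


Import GRing.Theory Num.Theory.

Ltac cmpt_ext2 ::= lazymatch goal with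
 | |- cmp _ (fun _ => radd _ _) => apply c_radd
 | |- cmp _ (fun _ => rmul _ _) => apply c_rmul
 | |- cmp _ (fun _ => rmk _ _ _) => apply c_rmk
 | |- cmp _ (fun _ => _ %% 4) => apply c_mod4
 | |- cmp _ (fun _ => _ %/ 4) => apply c_div4
 | |- cmp _ (fun _ => (_)./2) => apply c_half
 | |- cmp _ (fun _ => nat_of_bool (odd _)) => apply c_odd
 | |- cmp _ (fun _ => look _ _ _) => apply c_look
 | |- cmp _ (fun _ => const_r _) => apply c_const_r
 | |- cmp _ (fun _ => Ev _ _) => apply c_Ev
 | |- cmp _ (fun _ => Wf _ _) => apply c_Wf
 end.

Definition mktup n (f : nat -> rat) : n.-tuple rat := @Tuple n _ (mkseq f n) (introT eqP (size_mkseq f n)).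
Lemma nth_mktup n f i : i < n -> nth 0%R (mktup n f) i = f i.
Proof. move=> Hi; exact: nth_mkseq. Qed.

Definition valid k := (0 < ufst k) && (Wf (usnd k) (ufst k) == 1).
Definition zeroE c xs := rnum1 (Ev c xs) == rnum2 (Ev c xs).

Lemma valid_code n p : 0 < n -> zpoly_wf n p -> valid (code_poly n p).
Proof. by move=> Hn Hw; rewrite /valid /code_poly ufst_cpair usnd_cpair Hn Wf_correct Hw. Qed.

Lemma valid_dec k : valid k -> exists n p, [/\ 0 < n, zpoly_wf n p & k = code_poly n p].
Proof.
move=> /andP [Hn Hw]; have [p Hp] := code_surj (usnd k).
exists (ufst k), p; split => //.
  by move: Hw; rewrite -Hp Wf_correct; case: (zpoly_wf _ p).
by rewrite /code_poly Hp cpair_surj.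
Qed.

Lemma code_poly_inj n p m q : code_poly n p = code_poly m q -> n = m /\ p = q.
Proof. by move=> /cpair_inj [-> /code_zpoly_inj ->]. Qed.

Lemma HasRatSol_code n p : 0 < n -> zpoly_wf n p ->
  (HasRatSol (code_poly n p) <-> exists x : n.-tuple rat, zpoly_eval x p = 0%R).
Proof.
move=> Hn Hw; split.
  move=> [m [q [Hm Hwq /code_poly_inj [E1 E2] Hx]]]; subst; exact: Hx.
by move=> Hx; exists n, p; split.
Qed.

Lemma FinRatSol_code n p : 0 < n -> zpoly_wf n p ->
  (FinRatSol (code_poly n p) <-> has_finitely_many_rat_solutions n p).
Proof.
move=> Hn Hw; split.
  move=> [m [q [Hm Hwq /code_poly_inj [E1 E2] Hx]]]; subst; exact: Hx.
by move=> Hx; exists n, p; split.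
Qed.

Lemma HasRatSol_iff k : HasRatSol k <-> valid k /\ exists xs, zeroE (usnd k) xs.
Proof.
split.
  move=> [n [p [Hn Hw -> [x Hx]]]]; split; first exact: valid_code.
  exists (enc (map rcode_of x)).
  rewrite /zeroE /code_poly usnd_cpair -rat_of_eq0 (@Ev_correct n x) // ?Hx //.
  move=> i Hi; rewrite nthc_enc (nth_map 0%R) ?size_tuple // rcode_ofK //.
move=> [/valid_dec [n [p [Hn Hw ->]]] [xs Hxs]].
apply/HasRatSol_code => //; exists (mktup n (fun i => rat_of (nthc i xs))).
move: Hxs; rewrite /zeroE /code_poly usnd_cpair -rat_of_eq0 (@Ev_correct n (mktup n (fun i => rat_of (nthc i xs)))) //.
  by move/eqP.
move=> i Hi; exact: nth_mktup.
Qed.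

Lemma c_valid a F : cmp a F -> cmp a (fun v => nat_of_bool (valid (F v))).
Proof. move=> HF; rewrite /valid; cmpt. Qed.

Lemma sig1_HasRatSol : sig1 1 (fun v => HasRatSol (head 0 v)).
Proof.
apply: (@S_ext _ _ (fun v => exists xs, valid (nth 0 (xs :: v) 1) && zeroE (usnd (nth 0 (xs :: v) 1)) (nth 0 (xs :: v) 0))).
  move=> [|k [|y v]] //= _; rewrite HasRatSol_iff; split.
    by move=> [Hv [xs Hxs]]; exists xs; rewrite Hv.
  by move=> [xs /andP [Hv Hxs]]; split => //; exists xs.
apply: (@S_ex _ (fun w => valid (nth 0 w 1) && zeroE (usnd (nth 0 w 1)) (nth 0 w 0))); apply: (@S_decb _ _ (fun w => valid (nth 0 w 1) && zeroE (usnd (nth 0 w 1)) (nth 0 w 0))).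
  apply: c_andb; first by apply: c_valid; cmpt.
  rewrite /zeroE /rnum1 /rnum2; cmpt.
by move=> w _.
Qed.

Lemma eval_ext m m' (x : m.-tuple rat) (y : m'.-tuple rat) n p : zpoly_wf n p ->
  (forall i, i < n -> nth 0%R x i = nth 0%R y i) -> zpoly_eval x p = zpoly_eval y p.
Proof.
move=> Hw Hxy; elim: p Hw => [i|z|p IHp q IHq|p IHp q IHq] //= Hw.
- exact: Hxy.
- by move/andP: Hw => [/IHp -> /IHq ->].
- by move/andP: Hw => [/IHp -> /IHq ->].
Qed.

Lemma wf_mono n n' p : n <= n' -> zpoly_wf n p -> zpoly_wf n' p.
Proof.
move=> Hn; elim: p => [i|z|p IHp q IHq|p IHp q IHq] //=.
- move=> Hi; lia.
- by move/andP => [/IHp -> /IHq ->].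
- by move/andP => [/IHp -> /IHq ->].
Qed.

Definition ext n (x : n.-tuple rat) (t : rat) : n.+1.-tuple rat := mktup n.+1 (fun i => if i < n then nth 0%R x i else t).

Lemma fin_iff n p : zpoly_wf n p ->
  (has_finitely_many_rat_solutions n.+1 p <-> ~ exists x : n.-tuple rat, zpoly_eval x p = 0%R).
Proof.
move=> Hw; split.
  move=> [s Hs] [x Hx].
  pose Y (t : nat) := ext x t%:R.
  have HY : forall t, Y t \in s.
    move=> t; apply: Hs; rewrite /is_rat_solution -Hx; symmetry; apply: (eval_ext Hw) => i Hi.
    by rewrite nth_mktup ?Hi //; lia.
  have Hinj : injective Y.
    move=> t t' E; have := congr1 (fun y : n.+1.-tuple rat => nth 0%R y n) E.
    rewrite /Y !nth_mktup // ltnn => /eqP; rewrite eqr_nat => /eqP //.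
  have Hsub : {subset map Y (iota 0 (size s).+1) <= s} by move=> y /mapP [t _ ->].
  have Hu : uniq (map Y (iota 0 (size s).+1)) by rewrite map_inj_uniq // iota_uniq.
  have := uniq_leq_size Hu Hsub; by rewrite size_map size_iota ltnn.
move=> Hno; exists [::] => y Hy; exfalso; apply: Hno.
exists (mktup n (fun i => nth 0%R y i)).
have E : zpoly_eval (mktup n (fun i => nth 0%R y i)) p = zpoly_eval y p.
  by apply: (eval_ext Hw) => i Hi; rewrite nth_mktup.
by rewrite E.
Qed.

Definition hk k := cpair (ufst k).+1 (usnd k).

Lemma c_hk a F : cmp a F -> cmp a (fun v => hk (F v)).
Proof. move=> HF; rewrite /hk; cmpt. Qed.

Theorem dir2 : re_set FinRatSol -> recursive_set HasRatSol.
Proof.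
move=> Hre; apply: rec_of_sig1; first exact: sig1_HasRatSol.
apply: (@S_ext _ _ (fun v => ~~ valid (head 0 v) \/ FinRatSol (head 0 [:: hk (head 0 v)]))).
  move=> v _ /=; set k := head 0 v.
  case Hv: (valid k).
    have [n [p [Hn Hw Ek]]] := valid_dec Hv.
    have -> : hk k = code_poly n.+1 p by rewrite /hk Ek /code_poly ufst_cpair usnd_cpair.
    rewrite FinRatSol_code // ?(wf_mono _ Hw) // fin_iff // Ek HasRatSol_code //.
    by split => [H|[//|H]]; [right|].
  split => _; first by left.
  by rewrite HasRatSol_iff Hv => -[].
apply: S_or.
  apply: (@S_decb _ _ (fun v => ~~ valid (head 0 v))); last by [].
  apply: c_negb; apply: c_valid; cmpt.
apply: (@S_sub 1 1 _ [:: fun v => hk (head 0 v)] (re_sig1 Hre)); last by [].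
constructor; [apply: c_hk; cmpt | constructor].
Qed.


Import Order.TTheory GRing.Theory Num.Theory.

Definition zsq q := PMul q q.
Fixpoint zsum m (F : nat -> zpoly) := if m is m'.+1 then PAdd (zsum m' F) (F m') else PConst 0.
Fixpoint zprod m (F : nat -> zpoly) := if m is m'.+1 then PMul (zprod m' F) (F m') else PConst 1.
Definition negz r : int := if rnum1 r <= rnum2 r then Posz (rnum2 r - rnum1 r) else Negz (rnum1 r - rnum2 r).-1.
Definition term j r := zsq (PAdd (PMul (PConst (Posz (rden r))) (PVar j)) (PConst (negz r))).
Definition factor n a := zsum n (fun j => term j (nthc j a)).
Definition PLz n L := zprod L (fun i => factor n (nthc i L)).
Definition DL n p L := PAdd (zsq p) (zsq (PAdd (PMul (PLz n L) (PVar n)) (PConst (-1)))).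

Section Sem.
Variable (m : nat) (y : m.-tuple rat).

Lemma eval_sq q : zpoly_eval y (zsq q) = ((zpoly_eval y q) ^+ 2)%R.
Proof. by rewrite /= expr2. Qed.

Lemma zsum_sq_ge0 k G : (0 <= zpoly_eval y (zsum k (fun j => zsq (G j))))%R.
Proof.
elim: k => //= k IH; apply: addr_ge0 => //; rewrite -expr2; exact: sqr_ge0.
Qed.

Lemma zsum_sq0 k G : zpoly_eval y (zsum k (fun j => zsq (G j))) = 0%R <->
  forall j, j < k -> zpoly_eval y (G j) = 0%R.
Proof.
elim: k => [|k IH] /=; first by split => // _ j.
split.
  move/eqP; rewrite paddr_eq0 ?zsum_sq_ge0 -?expr2 ?sqr_ge0 // => /andP [/eqP /IH H1].
  rewrite sqrf_eq0 => /eqP H2 j; rewrite ltnS leq_eqVlt => /orP [/eqP -> //|]; exact: H1.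
move=> H; rewrite (proj2 IH); last by move=> j Hj; apply: H; lia.
by rewrite H // mulr0 addr0.
Qed.

Lemma zprod0 k F : zpoly_eval y (zprod k F) = 0%R <-> exists i, i < k /\ zpoly_eval y (F i) = 0%R.
Proof.
elim: k => [|k IH] /=.
  split => [/eqP|[i []]] //; by rewrite oner_eq0.
split.
  move/eqP; rewrite mulf_eq0 => /orP [/eqP /IH [i [Hi Hi']]|/eqP H].
    exists i; split => //; lia.
  by exists k.
move=> [i [Hi Hi']]; apply/eqP; rewrite mulf_eq0.
move: Hi; rewrite ltnS leq_eqVlt => /orP [/eqP Ei|Hi].
  by rewrite -Ei Hi' eqxx orbT.
by rewrite (proj2 IH) ?eqxx //; exists i.
Qed.

Lemma negz_aux (a b : nat) : (if a <= b then Posz (b - a) else Negz (a - b).-1) = (b%:Z - a%:Z)%R.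
Proof. case: leqP => H; rewrite ?NegzE; lia. Qed.

Lemma negzE r : ((negz r)%:~R = (rnum2 r)%:R - (rnum1 r)%:R :> rat)%R.
Proof. by rewrite /negz negz_aux intrB. Qed.

Lemma term0 j r : zpoly_eval y (PAdd (PMul (PConst (Posz (rden r))) (PVar j)) (PConst (negz r))) = 0%R <->
  nth 0%R y j = rat_of r.
Proof.
rewrite /= negzE /rat_of.
have Hd := rden_neq0 r.
split => H.
  apply: (mulfI Hd); rewrite mulrCA divff // mulr1.
  move/eqP: H; rewrite addr_eq0 => /eqP ->; by rewrite opprB.
rewrite H pmulrn; field; exact: Hd.
Qed.

Lemma factor0 n a : zpoly_eval y (factor n a) = 0%R <-> forall j, j < n -> nth 0%R y j = rat_of (nthc j a).
Proof.
rewrite /factor /term (@zsum_sq0 n (fun j => PAdd (PMul (PConst (Posz (rden (nthc j a)))) (PVar j)) (PConst (negz (nthc j a))))).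
by split => H j Hj; apply/term0; apply: H.
Qed.

Lemma PL0 n L : zpoly_eval y (PLz n L) = 0%R <->
  exists i, i < L /\ forall j, j < n -> nth 0%R y j = rat_of (nthc j (nthc i L)).
Proof.
rewrite /PLz zprod0; split => -[i [Hi H]]; exists i; split => //; exact/factor0.
Qed.

Lemma DL0 n p L : zpoly_eval y (DL n p L) = 0%R <->
  zpoly_eval y p = 0%R /\ (zpoly_eval y (PLz n L) * nth 0%R y n = 1)%R.
Proof.
rewrite /DL; set A := zpoly_eval y p; set B := (zpoly_eval y (PLz n L) * nth 0%R y n)%R.
have -> : zpoly_eval y (PAdd (zsq p) (zsq (PAdd (PMul (PLz n L) (PVar n)) (PConst (-1))))) = (A ^+ 2 + (B - 1) ^+ 2)%R.
  by rewrite /= !expr2.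
split.
  move/eqP; rewrite paddr_eq0 ?sqr_ge0 // !sqrf_eq0 subr_eq0 => /andP [/eqP -> /eqP ->] //.
  move=> [H1 H2]; rewrite H1 H2; ring.
Qed.

End Sem.

Lemma wf_zsum n k F : (forall j, j < k -> zpoly_wf n (F j)) -> zpoly_wf n (zsum k F).
Proof. elim: k => //= k IH H; rewrite IH ?H //; move=> j Hj; apply: H; lia. Qed.
Lemma wf_zprod n k F : (forall j, j < k -> zpoly_wf n (F j)) -> zpoly_wf n (zprod k F).
Proof. elim: k => //= k IH H; rewrite IH ?H //; move=> j Hj; apply: H; lia. Qed.
Lemma wf_PL n L : zpoly_wf n (PLz n L).
Proof. apply: wf_zprod => i _; apply: wf_zsum => j Hj /=; by rewrite Hj. Qed.
Lemma wf_DL n p L : zpoly_wf n p -> zpoly_wf n.+1 (DL n p L).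
Proof.
move=> Hw; rewrite /DL /= !(wf_mono _ Hw) ?(wf_mono _ (wf_PL n L)) //. by rewrite ltnSn.
Qed.

Lemma noDL n p L : zpoly_wf n p ->
  (~ exists y : n.+1.-tuple rat, zpoly_eval y (DL n p L) = 0%R) <->
  forall x : n.-tuple rat, zpoly_eval x p = 0%R ->
     exists i, i < L /\ forall j, j < n -> nth 0%R x j = rat_of (nthc j (nthc i L)).
Proof.
move=> Hw; split.
  move=> Hno x Hx; apply: NNPP => Hns; apply: Hno.
  pose y0 := ext x 0%R.
  have Hc : zpoly_eval y0 (PLz n L) != 0%R.
    apply/negP => /eqP /PL0 [i [Hi Hj]]; apply: Hns; exists i; split => // j Hjn.
    by rewrite -Hj // /y0 nth_mktup ?Hjn //; lia.
  exists (ext x (zpoly_eval y0 (PLz n L))^-1); apply/DL0; split.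
    have E : zpoly_eval (ext x (zpoly_eval y0 (PLz n L))^-1) p = zpoly_eval x p.
      apply: (eval_ext Hw) => i Hi; by rewrite nth_mktup ?Hi //; lia.
    by rewrite E.
  rewrite nth_mktup // ltnn.
  have -> : zpoly_eval (ext x (zpoly_eval y0 (PLz n L))^-1) (PLz n L) = zpoly_eval y0 (PLz n L).
    apply: (eval_ext (wf_PL n L)) => i Hi; by rewrite !nth_mktup ?Hi //; lia.
  by rewrite divff.
move=> H [y /DL0 [Hy HP]].
have Hx : zpoly_eval (mktup n (fun j => nth 0%R y j)) p = 0%R.
  have E : zpoly_eval (mktup n (fun j => nth 0%R y j)) p = zpoly_eval y p.
    by apply: (eval_ext Hw) => j Hj; rewrite nth_mktup.
  by rewrite E.
have [i [Hi Hj]] := H _ Hx.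
have : zpoly_eval y (PLz n L) = 0%R.
  apply/PL0; exists i; split => // j Hjn; by rewrite -Hj // nth_mktup.
by move=> E; move: HP; rewrite E mul0r => /eqP; rewrite eq_sym oner_eq0.
Qed.

Lemma size_enc s : size s <= enc s.
Proof. elim: s => //= x s IH; have := cpair_geR x (enc s); lia. Qed.

Lemma fin_DL n p : 0 < n -> zpoly_wf n p ->
  (has_finitely_many_rat_solutions n p <-> exists L, ~ HasRatSol (code_poly n.+1 (DL n p L))).
Proof.
move=> Hn Hw; split.
  move=> [s Hs]; exists (enc (map (fun x : n.-tuple rat => enc (map rcode_of x)) s)).
  rewrite HasRatSol_code ?wf_DL // noDL // => x /Hs Hx.
  exists (index x s); split.
    apply: leq_trans (size_enc _); by rewrite size_map index_mem.
  move=> j Hj; rewrite nthc_enc (nth_map x) ?index_mem // nth_index // nthc_enc.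
  by rewrite (nth_map 0%R) ?size_tuple // rcode_ofK.
move=> [L HL]; move: HL; rewrite HasRatSol_code ?wf_DL // noDL // => H.
exists (map (fun i => mktup n (fun j => rat_of (nthc j (nthc i L)))) (iota 0 L)) => x /H [i [Hi Hj]].
have -> : x = mktup n (fun j => rat_of (nthc j (nthc i L))).
  apply: val_inj; apply: (@eq_from_nth _ 0%R); first by rewrite /= !size_tuple.
  move=> j; rewrite size_tuple => Hjn; by rewrite nth_mktup // Hj.
by apply: map_f; rewrite mem_iota.
Qed.


Definition cADD a b := 4 * cpair a b + 2.
Definition cMUL a b := 4 * cpair a b + 3.
Fixpoint citer (op : nat -> nat -> nat) b m (F : nat -> nat) :=
  if m is m'.+1 then op (citer op b m' F) (F m') else b.

Lemma eq_citer op b m F G : (forall j, j < m -> F j = G j) -> citer op b m F = citer op b m G.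
Proof. elim: m => //= m IH H; rewrite IH ?H // => j Hj; apply: H; lia. Qed.

Lemma code_zsum m F : code_zpoly (zsum m F) = citer cADD 1 m (fun j => code_zpoly (F j)).
Proof. by elim: m => //= m ->. Qed.
Lemma code_zprod m F : code_zpoly (zprod m F) = citer cMUL 9 m (fun j => code_zpoly (F j)).
Proof. by elim: m => //= m ->. Qed.

Definition code_negz r := if rnum1 r <= rnum2 r then (rnum2 r - rnum1 r).*2 else ((rnum1 r - rnum2 r).-1).*2.+1.
Lemma code_negzE r : code_int (negz r) = code_negz r.
Proof. by rewrite /negz /code_negz; case: leqP. Qed.

Definition cterm j r := cMUL (cADD (cMUL (4 * (rden r).*2 + 1) (4 * j)) (4 * code_negz r + 1))
                             (cADD (cMUL (4 * (rden r).*2 + 1) (4 * j)) (4 * code_negz r + 1)).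
Definition cfactor n a := citer cADD 1 n (fun j => cterm j (nthc j a)).
Definition cPL n L := citer cMUL 9 L (fun i => cfactor n (nthc i L)).
Definition cDL n c L := cADD (cMUL c c) (cMUL (cADD (cMUL (cPL n L) (4 * n)) 5) (cADD (cMUL (cPL n L) (4 * n)) 5)).

Lemma cDL_code n p L : cDL n (code_zpoly p) L = code_zpoly (DL n p L).
Proof.
rewrite /cDL /DL /= /PLz code_zprod /cPL /cADD /cMUL.
have -> : citer cMUL 9 L (fun i => code_zpoly (factor n (nthc i L))) = citer cMUL 9 L (fun i => cfactor n (nthc i L)).
  apply: eq_citer => i _; rewrite /factor code_zsum /cfactor; apply: eq_citer => j _.
  by rewrite /term /cterm /= code_negzE.
by [].
Qed.

Lemma c_citer a op b N Gc : (forall a F G, cmp a F -> cmp a G -> cmp a (fun v => op (F v) (G v))) ->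
  cmp a.+1 Gc -> cmp a N -> cmp a (fun v => citer op b (N v) (fun j => Gc (j :: v))).
Proof.
move=> Hop HG HN.
apply: (@c_ext _ _ (fun v => PR (fun _ => b) (fun u => op (nth 0 u 1) (Gc (nth 0 u 0 :: drop 2 u))) (N v) v)).
  move=> v _; elim: (N v) => //= m ->; by rewrite drop0.
apply: c_prec => //; first exact: c_const.
apply: Hop; first cmpt.
apply: (@c_ext _ _ (fun u => Gc (map (fun H => H u) [:: fun u => nth 0 u 0] ++ drop 2 u))) => //.
apply: (@c_sub a.+2 a.+1 2 _ Gc); [by rewrite subSS subSS subn0 | exact: HG | constructor; [cmpt | constructor]].
Qed.

Lemma c_cADD a F G : cmp a F -> cmp a G -> cmp a (fun v => cADD (F v) (G v)).
Proof. move=> *; rewrite /cADD; cmpt. Qed.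
Lemma c_cMUL a F G : cmp a F -> cmp a G -> cmp a (fun v => cMUL (F v) (G v)).
Proof. move=> *; rewrite /cMUL; cmpt. Qed.

Lemma c_double a F : cmp a F -> cmp a (fun v => (F v).*2).
Proof. move=> HF; apply: (@c_ext _ _ (fun v => F v + F v)); [move=> v _; by rewrite addnn | cmpt]. Qed.

Lemma c_cterm a J R : cmp a J -> cmp a R -> cmp a (fun v => cterm (J v) (R v)).
Proof.
move=> HJ HR; rewrite /cterm /code_negz /rden /rnum1 /rnum2.
apply: c_cMUL; apply: c_cADD; (try apply: c_cMUL); cmpt; apply: c_double; cmpt.
Qed.

Lemma c_cfactor a N A : cmp a N -> cmp a A -> cmp a (fun v => cfactor (N v) (A v)).
Proof.
move=> HN HA.
have H : cmp 2 (fun u => cfactor (nth 0 u 0) (nth 0 u 1)).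
  apply: (@c_ext _ _ (fun u => citer cADD 1 (nth 0 u 0) (fun j => (fun w => cterm (nth 0 w 0) (nthc (nth 0 w 0) (nth 0 w 2))) (j :: u)))) => //.
  apply: (@c_citer 2 cADD 1 (fun u => nth 0 u 0) (fun w => cterm (nth 0 w 0) (nthc (nth 0 w 0) (nth 0 w 2))));
    [exact: c_cADD | apply: c_cterm; cmpt | cmpt].
exact: (c_app2 H).
Qed.

Lemma c_cPL a N L : cmp a N -> cmp a L -> cmp a (fun v => cPL (N v) (L v)).
Proof.
move=> HN HL.
have H : cmp 2 (fun u => cPL (nth 0 u 0) (nth 0 u 1)).
  apply: (@c_ext _ _ (fun u => citer cMUL 9 (nth 0 u 1) (fun i => (fun w => cfactor (nth 0 w 1) (nthc (nth 0 w 0) (nth 0 w 2))) (i :: u)))) => //.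
  apply: (@c_citer 2 cMUL 9 (fun u => nth 0 u 1) (fun w => cfactor (nth 0 w 1) (nthc (nth 0 w 0) (nth 0 w 2))));
    [exact: c_cMUL | apply: c_cfactor; cmpt | cmpt].
exact: (c_app2 H).
Qed.

Lemma c_cDL a N C L : cmp a N -> cmp a C -> cmp a L -> cmp a (fun v => cDL (N v) (C v) (L v)).
Proof.
move=> HN HC HL; rewrite /cDL.
apply: c_cADD; apply: c_cMUL; try apply: c_cADD; try apply: c_cMUL; try exact: c_cPL; cmpt.
Qed.

Definition Gd k := if excluded_middle_informative (HasRatSol k) then 1 else 0.

Lemma Gd0 k : Gd k = 0 <-> ~ HasRatSol k.
Proof. rewrite /Gd; by case: excluded_middle_informative. Qed.

Lemma c_Gd a F : recursive_set HasRatSol -> cmp a F -> cmp a (fun v => Gd (F v)).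
Proof.
move=> [f Hf]; apply: c_app1; exists f => -[|k [|x v]] //= _.
rewrite /Gd; case: excluded_middle_informative => H; case: (Hf k) => [[H1 H2]|[H1 H2]] //.
Qed.

Lemma FinRatSol_iff k : FinRatSol k <->
  valid k /\ exists L, ~ HasRatSol (cpair (ufst k).+1 (cDL (ufst k) (usnd k) L)).
Proof.
split.
  move=> [n [p [Hn Hw -> Hfin]]]; split; first exact: valid_code.
  have [L HL] := proj1 (fin_DL Hn Hw) Hfin; exists L.
  by rewrite /code_poly ufst_cpair usnd_cpair cDL_code.
move=> [/valid_dec [n [p [Hn Hw ->]]] [L HL]].
apply/FinRatSol_code => //; apply/(fin_DL Hn Hw); exists L.
by move: HL; rewrite /code_poly ufst_cpair usnd_cpair cDL_code.
Qed.

Theorem dir1 : recursive_set HasRatSol -> re_set FinRatSol.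
Proof.
move=> Hrec; apply: re_of_sig1.
apply: (@S_ext _ _ (fun v => valid (head 0 v) /\
   exists L, (fun w => Gd (cpair (ufst (nth 0 w 1)).+1 (cDL (ufst (nth 0 w 1)) (usnd (nth 0 w 1)) (nth 0 w 0))) = 0) (L :: v))).
  move=> v _; rewrite FinRatSol_iff; split => -[H1 [L HL]]; split => //; exists L => /=; exact/Gd0.
apply: S_and.
  apply: (@S_decb _ _ (fun v => valid (head 0 v))); last by [].
  apply: c_valid; cmpt.
apply: (@S_ex _ (fun w => Gd (cpair (ufst (nth 0 w 1)).+1 (cDL (ufst (nth 0 w 1)) (usnd (nth 0 w 1)) (nth 0 w 0))) = 0)).
apply: (@S_dec _ _ (fun w => Gd (cpair (ufst (nth 0 w 1)).+1 (cDL (ufst (nth 0 w 1)) (usnd (nth 0 w 1)) (nth 0 w 0))))); last by [].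
apply: c_Gd => //; apply: c_cpair; first cmpt.
apply: c_cDL; cmpt.
Qed.

Theorem mainTheorem13 :
  (recursive_set HasRatSol <-> re_set FinRatSol) /\
  (~ recursive_set HasRatSol <-> ~ re_set FinRatSol).
Proof.
have E : recursive_set HasRatSol <-> re_set FinRatSol by split; [exact: dir1 | exact: dir2].
split => //; rewrite E; by split.
Qed.
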